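(* The graph property $3\text{-}\mathsf{COLORABLE}$ does not belong to $\mathrm{LP}$.
   Context: Graphs. All graphs are finite, nonempty, simple, undirected and connected, and labeled: a graph is a triple $G=(V(G),E(G),\lambda_G)$ with labeling $\lambda_G:V(G)\to\{0,1\}^*$. A graph property is a set of graphs closed under label-preserving isomorphism. $3\text{-}\mathsf{COLORABLE}$ is the set of graphs $G$ admitting $f:V(G)\to\{0,1,2\}$ with $f(u)\ne f(v)$ for every edge $\{u,v\}$ (labels irrelevant). Identifiers. An identifier assignment of $G$ is a map $\mathrm{id}:V(G)\to\{0,1\}^*$; it is $r$-locally unique if $\mathrm{id}(u)\neq\mathrm{id}(v)$ for all distinct nodes $u,v$ at distance at most $2r$. Identifiers are ordered lexicographically (a proper prefix is smaller). Distributed Turing machines. Such a machine $M$ is a Turing machine with three one-way-infinite tapes (receiving, internal, sending) over the alphabet $\{\vdash,\square,\#,0,1\}$ (left-end marker, blank, separator, bits), with designated states start, pause, stop. It is executed on a graph $G$ under an (at least $1$-locally unique) identifier assignment $\mathrm{id}$: every node runs its own copy of $M$ in synchronous rounds. In each round, a node $u$ whose neighbors are $v_1,\dots,v_d$ in increasing identifier order (i) gets $m_1\#\cdots\#m_d\#$ on its receiving tape, where $m_i$ is the message sent to it by $v_i$ in the previous round (empty in the first round); (ii) its sending tape is emptied, its internal tape is initialized to $\lambda_G(u)\#\mathrm{id}(u)\#$ in the first round and otherwise keeps its content, and, unless $u$ reached stop in an earlier round, $M$ runs from state start with all heads leftmost until it enters pause or stop; (iii) $u$ sends to $v_i$ the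 $i$-th $\#$-separated bit string on its sending tape (the empty string if there is none). The execution terminates once all nodes are in stop; $G$ is accepted if at that point every node has exactly the bit string $1$ on its internal tape (symbols other than $0,1$ ignored). A local-polynomial machine is a distributed Turing machine for which there are a constant $c$ and a polynomial $q$ such that, on every graph and under all identifier assignments, all nodes reach stop within $c$ rounds, and in every round every node makes at most $q(n)$ computation steps, $n$ being the total length of its receiving- and internal-tape contents at the beginning of the round. $\mathrm{LP}$ is the class of graph properties $P$ for which there are a local-polynomial machine $M$ and a constant $r_{\mathrm{id}}\ge1$ such that for every graph $G$ and every $r_{\mathrm{id}}$-locally unique identifier assignment $\mathrm{id}$, $M$ accepts $G$ under $\mathrm{id}$ iff $G\in P$. *)

(* Defs.v *)
From mathcomp Require Import all_boot.
Set Implicit Arguments. Unset Strict Implicit. Unset Printing Implicit Defensive.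

(* Vertex set 'I_gn (every finite graph is isomorphic to such a one).  *)
Record graph := Graph {
  gn : nat;
  gadj : rel 'I_gn;
  glab : 'I_gn -> seq bool;
  g_nonempty : 0 < gn;
  g_sym : symmetric gadj;
  g_irr : irreflexive gadj;
  g_conn : forall u v : 'I_gn, connect gadj u v
}.

Definition vertex (G : graph) := 'I_(gn G).

Definition three_colorable (G : graph) : Prop :=
  exists f : 'I_(gn G) -> 'I_3, forall u v, gadj u v -> f u != f v.

Definition ident (G : graph) := 'I_(gn G) -> seq bool.

Fixpoint ball (G : graph) (k : nat) (u : 'I_(gn G)) : {set 'I_(gn G)} :=
  if k is k'.+1 then
    ball k' u :|: [set w | [exists v in ball k' u, gadj v w]]
  else [set u].

Definition locally_unique (G : graph) (r : nat) (id : ident G) : Prop :=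
  forall u v : 'I_(gn G), u != v -> v \in ball (2 * r) u -> id u != id v.

Fixpoint lexlt (s t : seq bool) : bool :=
  match s, t with
  | [::], [::] => false
  | [::], _ :: _ => true
  | _ :: _, [::] => false
  | a :: s', b :: t' => (~~ a && b) || ((a == b) && lexlt s' t')
  end.
Definition lexle (s t : seq bool) : bool := (s == t) || lexlt s t.

Inductive sym := Lend | Blank | Hash | S0 | S1.
Inductive move := ML | MR | MN.

Definition is_blank (a : sym) : bool := if a is Blank then true else false.
Definition sym_of_bit (b : bool) : sym := if b then S1 else S0.
Definition enc (s : seq bool) : seq sym := map sym_of_bit s.
Definition bits (t : seq sym) : seq bool :=
  pmap (fun a => match a with S0 => Some false | S1 => Some true | _ => None end) t.

(* A tape is the list of cells 1, 2, ...; cell 0 holds the left-end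
   marker; cells beyond the list are blank. *)
Definition read (t : seq sym) (p : nat) : sym :=
  if p is p'.+1 then nth Blank t p' else Lend.
Definition write (t : seq sym) (p : nat) (a : sym) : seq sym :=
  if p is p'.+1 then set_nth Blank t p' a else t.
Definition mv (p : nat) (m : move) : nat :=
  match m with ML => p.-1 | MR => p.+1 | MN => p end.

Fixpoint trim_rev (t : seq sym) : seq sym :=
  if t is a :: t' then (if is_blank a then trim_rev t' else t) else [::].
Definition content (t : seq sym) : seq sym := rev (trim_rev (rev t)).

Fixpoint split_hash (t : seq sym) : seq (seq sym) :=
  match t with
  | [::] => [:: [::]]
  | Hash :: t' => [::] :: split_hash t'
  | a :: t' => match split_hash t' with
               | w :: ws => (a :: w) :: ws
               | [::] => [:: [:: a]]
               end
  end.

Record DTM := Dtm {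
  nst : nat;
  q_start : 'I_nst;
  q_pause : 'I_nst;
  q_stop : 'I_nst;
  delta : 'I_nst -> sym -> sym -> sym ->
          'I_nst * (sym * sym * sym) * (move * move * move)
}.

Record config (M : DTM) := Config {
  cst : 'I_(nst M);
  tp1 : seq sym; tp2 : seq sym; tp3 : seq sym;  (* receiving, internal, sending *)
  hd1 : nat; hd2 : nat; hd3 : nat
}.

Definition step (M : DTM) (c : config M) : config M :=
  let: (q', (a1, a2, a3), (m1, m2, m3)) :=
     delta (cst c) (read (tp1 c) (hd1 c)) (read (tp2 c) (hd2 c)) (read (tp3 c) (hd3 c)) in
  Config q' (write (tp1 c) (hd1 c) a1) (write (tp2 c) (hd2 c) a2) (write (tp3 c) (hd3 c) a3)
         (mv (hd1 c) m1) (mv (hd2 c) m2) (mv (hd3 c) m3).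

Definition exec (M : DTM) (c : config M) (k : nat) : config M := iter k (@step M) c.

Definition halted (M : DTM) (c : config M) : bool :=
  (cst c == q_pause M) || (cst c == q_stop M).

Definition halts_at (M : DTM) (c : config M) (k : nat) : Prop :=
  halted (exec c k) /\ forall j, j < k -> ~~ halted (exec c j).

Definition init_config (M : DTM) (recv internal : seq sym) : config M :=
  Config (q_start M) recv internal [::] 0 0 0.

Record gstate (G : graph) := GState {
  itape : 'I_(gn G) -> seq sym;
  stopped : 'I_(gn G) -> bool;
  out : 'I_(gn G) -> 'I_(gn G) -> seq bool   (* out u v = message from u to v *)
}.

Definition init_gstate (G : graph) : gstate G :=
  GState (fun _ => [::]) (fun _ => false) (fun _ _ => [::]).

Definition nbrs (G : graph) (id : ident G) (u : 'I_(gn G)) : seq 'I_(gn G) :=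
  sort (fun v w => lexle (id v) (id w)) [seq v <- enum 'I_(gn G) | gadj u v].

Definition recv_tape (G : graph) (id : ident G) (s : gstate G) (u : 'I_(gn G)) :=
  flatten [seq enc (out s v u) ++ [:: Hash] | v <- nbrs id u].

Definition internal_tape (G : graph) (id : ident G) (first : bool) (s : gstate G)
    (u : 'I_(gn G)) : seq sym :=
  if first then enc (glab u) ++ Hash :: enc (id u) ++ [:: Hash] else itape s u.

Definition round_rel (M : DTM) (G : graph) (id : ident G) (first : bool)
    (s s' : gstate G) : Prop :=
  forall u : 'I_(gn G),
    let recv := recv_tape id s u in
    let internal := internal_tape id first s u in
    if stopped s u then
      [/\ itape s' u = internal, stopped s' u = true & forall v, out s' u v = [::]]
    else exists k, halts_at (init_config M recv internal) k /\
      let c := exec (init_config M recv internal) k in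
      [/\ itape s' u = tp2 c, stopped s' u = (cst c == q_stop M) &
          forall v, out s' u v =
            if gadj u v then
              bits (nth [::] (split_hash (content (tp3 c))) (index v (nbrs id u)))
            else [::]].

Inductive reach (M : DTM) (G : graph) (id : ident G) : nat -> gstate G -> Prop :=
| reach0 : reach M id 0 (init_gstate G)
| reachS r s s' : reach M id r s -> round_rel M id (r == 0) s s' -> reach M id r.+1 s'.

Definition accepts (M : DTM) (G : graph) (id : ident G) : Prop :=
  exists r (s : gstate G), [/\ reach M id r s, forall u, stopped s u &
                              forall u, bits (itape s u) = [:: true]].

Definition peval (q : seq nat) (n : nat) : nat :=
  \sum_(i < size q) nth 0 q i * n ^ i.

Definition local_polynomial (M : DTM) : Prop :=
  exists (c : nat) (q : seq nat),
    forall (G : graph) (id : ident G), locally_unique 1 id ->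
      (forall r (s : gstate G), reach M id r s -> forall u, ~~ stopped s u ->
         let recv := recv_tape id s u in
         let internal := internal_tape id (r == 0) s u in
         exists k, halts_at (init_config M recv internal) k /\
                   k <= peval q (size (content recv) + size (content internal)))
      /\ (forall s : gstate G, reach M id c s -> forall u, stopped s u).

Definition graph_property := graph -> Prop.

Definition LP (P : graph_property) : Prop :=
  exists (M : DTM) (rid : nat),
    [/\ local_polynomial M, 1 <= rid &
        forall (G : graph) (id : ident G), locally_unique rid id ->
          (accepts M id <-> P G)].

(* Main.v *)
Require Import Defs.
From mathcomp Require Import all_boot zify.
From Stdlib Require Import FunctionalExtensionality ClassicalEpsilon.
Set Implicit Arguments. Unset Strict Implicit. Unset Printing Implicit Defensive.


Lemma lexlt_irr s : lexlt s s = false.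
Proof. by elim: s => [|a s IH] //=; rewrite IH; case: a. Qed.

Lemma lexlt_trans s t u : lexlt s t -> lexlt t u -> lexlt s u.
Proof.
elim: s t u => [|a s IH] [|b t] [|c u] //=.
move: (IH t u); by case: a; case: b; case: c => //=; rewrite ?orbF ?andbF ?andbT /=.
Qed.

Lemma lexlt_total s t : [|| s == t, lexlt s t | lexlt t s].
Proof.
elim: s t => [|a s IH] [|b t] //=.
move: (IH t); rewrite eqseq_cons.
by case: a; case: b => //=; rewrite ?orbF ?andbF ?andbT /=.
Qed.

Lemma lexle_total : total lexle.
Proof. move=> s t; rewrite /lexle; move: (lexlt_total s t); rewrite (eq_sym t).
by case: (s == t) => //=; rewrite orbC.
Qed.

Lemma lexle_trans : transitive lexle.
Proof.
move=> t s u; rewrite /lexle => /orP[/eqP->//|h1] /orP[/eqP<-|h2]; first by rewrite h1 orbT.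
by rewrite (lexlt_trans h1 h2) orbT.
Qed.

Lemma lexle_anti : antisymmetric lexle.
Proof.
move=> s t; rewrite /lexle => /andP[/orP[/eqP//|h1] /orP[/eqP->//|h2]].
by move: (lexlt_trans h1 h2); rewrite lexlt_irr.
Qed.


Lemma halts_at_uniq (M : DTM) (c : config M) k1 k2 :
  halts_at c k1 -> halts_at c k2 -> k1 = k2.
Proof.
move=> [h1 n1] [h2 n2]; case: (ltngtP k1 k2) => // h.
- by move: (n2 _ h); rewrite h1.
- by move: (n1 _ h); rewrite h2.
Qed.

Lemma gstate_ext (G : graph) (s1 s2 : gstate G) :
  (forall u, itape s1 u = itape s2 u) -> (forall u, stopped s1 u = stopped s2 u) ->
  (forall u v, out s1 u v = out s2 u v) -> s1 = s2.
Proof.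
case: s1 s2 => i1 st1 o1 [i2 st2 o2] /= hi hs ho.
have -> : i1 = i2 by apply: functional_extensionality.
have -> : st1 = st2 by apply: functional_extensionality.
have -> : o1 = o2 by apply: functional_extensionality => u; apply: functional_extensionality.
by [].
Qed.

Lemma round_det (M : DTM) (G : graph) (id : ident G) first (s s1 s2 : gstate G) :
  round_rel M id first s s1 -> round_rel M id first s s2 -> s1 = s2.
Proof.
move=> h1 h2; have key : forall u, [/\ itape s1 u = itape s2 u, stopped s1 u = stopped s2 u &
    forall v, out s1 u v = out s2 u v].
  move=> u; move: (h1 u) (h2 u) => /=; case: (stopped s u).
    by move=> [-> -> o1] [-> -> o2]; split=> // v; rewrite o1 o2.
  move=> [k1 [hk1 [-> -> o1]]] [k2 [hk2 [-> -> o2]]].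
  rewrite (halts_at_uniq hk1 hk2); split=> // v; by rewrite o1 o2 (halts_at_uniq hk1 hk2).
by apply: gstate_ext => [u|u|u v]; case: (key u).
Qed.

Lemma reach_det (M : DTM) (G : graph) (id : ident G) r (s1 s2 : gstate G) :
  reach M id r s1 -> reach M id r s2 -> s1 = s2.
Proof.
move=> h; elim: h s2 => [|r' t t' ht IH hr] s2 h2.
  by inversion h2.
inversion h2; subst.
have e := IH _ H0; subst.
exact: round_det hr H1.
Qed.

Lemma reach_ex (M : DTM) (G : graph) (id : ident G) :
  (forall r (s : gstate G), reach M id r s -> forall u, ~~ stopped s u ->
         let recv := recv_tape id s u in
         let internal := internal_tape id (r == 0) s u in
         exists k, halts_at (init_config M recv internal) k) ->
  forall r, exists s, reach M id r s.
Proof.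
move=> hl; elim=> [|r [s hs]]; first by exists (init_gstate G); constructor.
have hk : forall u, exists k, ~~ stopped s u ->
   halts_at (init_config M (recv_tape id s u) (internal_tape id (r == 0) s u)) k.
  move=> u; case e: (stopped s u); first by exists 0.
  by have [k hk] := hl _ _ hs u (negbT e); exists k.
pose kf u := proj1_sig (constructive_indefinite_description _ (hk u)).
have kfP u : ~~ stopped s u ->
   halts_at (init_config M (recv_tape id s u) (internal_tape id (r == 0) s u)) (kf u).
  exact: (proj2_sig (constructive_indefinite_description _ (hk u))).
pose cf u := exec (init_config M (recv_tape id s u) (internal_tape id (r == 0) s u)) (kf u).
exists (GState (fun u => if stopped s u then internal_tape id (r == 0) s u else tp2 (cf u))
  (fun u => stopped s u || (cst (cf u) == q_stop M))
  (fun u v => if stopped s u then [::] else if gadj u v then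
      bits (nth [::] (split_hash (content (tp3 (cf u)))) (index v (nbrs id u))) else [::])).
apply: reachS hs _ => u /=.
case e: (stopped s u) => //.
exists (kf u); split; first by apply: kfP; rewrite e.
by split.
Qed.


Lemma index_map_in (T1 T2 : eqType) (f : T1 -> T2) (s : seq T1) y :
  y \in s -> {in s, forall z, f z = f y -> z = y} -> index (f y) (map f s) = index y s.
Proof.
elim: s => [|a s IH] //= hy hin.
case: (eqVneq a y) => [->|ne]; first by rewrite !eqxx.
have -> : (f a == f y) = false.
  by apply/negbTE/eqP => /(hin a (mem_head _ _)) e; move: ne; rewrite e eqxx.
rewrite IH //.
  by move: hy; rewrite in_cons eq_sym (negbTE ne).
by move=> z zs; apply: hin; rewrite in_cons zs orbT.
Qed.

Section Cover.
Variables (M : DTM) (G H : graph) (phi : 'I_(gn H) -> 'I_(gn G)) (idG : ident G).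
Hypothesis hinj : injective idG.
Hypothesis hlab : forall x, glab x = glab (phi x).
Hypothesis C1 : forall x y, gadj x y -> gadj (phi x) (phi y).
Hypothesis C2 : forall x v, gadj (phi x) v -> exists2 y, gadj x y & phi y = v.
Hypothesis C3 : forall x y y', gadj x y -> gadj x y' -> phi y = phi y' -> y = y'.

Definition idH : ident H := fun x => idG (phi x).

Definition lift (s : gstate G) : gstate H :=
  GState (fun x => itape s (phi x)) (fun x => stopped s (phi x))
   (fun x y => if gadj x y then out s (phi x) (phi y) else [::]).

Lemma mem_nbrs (K : graph) (id : ident K) x y : (y \in nbrs id x) = gadj x y.
Proof. by rewrite /nbrs mem_sort mem_filter mem_enum andbT. Qed.

Lemma nbrs_map x : map phi (nbrs idH x) = nbrs idG (phi x).
Proof.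
rewrite /nbrs /idH.
rewrite (_ : sort _ _ = sort (relpre phi (fun a b => lexle (idG a) (idG b))) [seq v <- enum 'I_(gn H) | gadj x v]) // -sort_map.
apply/perm_sortP.
- by move=> a b; apply: lexle_total.
- by move=> a b c; apply: lexle_trans.
- by move=> a b /lexle_anti; apply: hinj.
apply: uniq_perm.
- rewrite map_inj_in_uniq. rewrite filter_uniq //. apply: enum_uniq.
  by move=> a b; rewrite !mem_filter => /andP[ha _] /andP[hb _]; exact: C3 ha hb.
- by rewrite filter_uniq //; apply: enum_uniq.
move=> v; rewrite mem_filter mem_enum andbT; apply/mapP/idP.
  by move=> [y]; rewrite mem_filter => /andP[hy _] ->; apply: C1.
by move=> /C2 [y hy <-]; exists y => //; rewrite mem_filter hy mem_enum.
Qed.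

Lemma index_nbrs x y : gadj x y ->
  index y (nbrs idH x) = index (phi y) (nbrs idG (phi x)).
Proof.
move=> hxy; rewrite -nbrs_map index_map_in //; first by rewrite mem_nbrs.
by move=> z; rewrite mem_nbrs => hz; exact: C3 hz hxy.
Qed.

Lemma recv_lift s x : recv_tape idH (lift s) x = recv_tape idG s (phi x).
Proof.
rewrite /recv_tape -nbrs_map -map_comp; congr flatten; apply/eq_in_map => v.
by rewrite mem_nbrs /= => h; rewrite g_sym h.
Qed.

Lemma internal_lift first s x :
  internal_tape idH first (lift s) x = internal_tape idG first s (phi x).
Proof. by rewrite /internal_tape hlab. Qed.

Lemma round_lift first s s' : round_rel M idG first s s' ->
  round_rel M idH first (lift s) (lift s').
Proof.
move=> h x; move: (h (phi x)) => /=; rewrite recv_lift internal_lift.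
case: (stopped s (phi x)).
  by move=> [-> -> ho]; split=> // v; case: (gadj x v).
move=> [k [hk [-> -> ho]]]; exists k; split=> //; split=> // v.
case hxv: (gadj x v) => //; rewrite ho (C1 hxv) index_nbrs //.
Qed.

Lemma reach_lift r s : reach M idG r s -> reach M idH r (lift s).
Proof.
elim=> [|r' t t' _ IH hr].
  have -> : lift (init_gstate G) = init_gstate H.
    by apply: gstate_ext => //= u v; case: (gadj u v).
  by constructor.
apply: reachS IH _; exact: round_lift.
Qed.

End Cover.


Definition adjn (n u v : nat) : bool :=
  [|| v == u + 1, v == u + 2, v + n == u + 1, v + n == u + 2,
      u == v + 1, u == v + 2, u + n == v + 1 | u + n == v + 2].

Lemma circ_sym m : symmetric (fun u v : 'I_m.+1 => adjn m.+1 u v).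
Proof. move=> u v; rewrite /adjn; lia. Qed.

Lemma circ_irr m : 3 < m -> irreflexive (fun u v : 'I_m.+1 => adjn m.+1 u v).
Proof. move=> hm u; move: (ltn_ord u); rewrite /adjn; lia. Qed.

Lemma circ_conn m : forall u v : 'I_m.+1, connect (fun u v : 'I_m.+1 => adjn m.+1 u v) u v.
Proof.
have h0 : forall i, i < m.+1 -> connect (fun u v : 'I_m.+1 => adjn m.+1 u v) ord0 (inord i).
  elim=> [|i IH] hi.
    by rewrite (_ : inord 0 = ord0) //; apply: val_inj; rewrite /= inordK.
  apply: connect_trans (IH (ltnW hi)) (connect1 _).
  rewrite /= !inordK //; last by apply: ltnW.
  rewrite /adjn; lia.
move=> u v.
have hu := h0 _ (ltn_ord u); rewrite inord_val (sym_connect_sym (@circ_sym m)) in hu.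
have hv := h0 _ (ltn_ord v); rewrite inord_val in hv.
exact: connect_trans hu hv.
Qed.

Definition circ (m : nat) (hm : 3 < m) : graph :=
  @Graph m.+1 (fun u v : 'I_m.+1 => adjn m.+1 u v) (fun _ => [::]) (ltn0Sn m)
    (@circ_sym m) (circ_irr hm) (@circ_conn m).

Definition phin (N x : nat) := if x < N then x else if x < N + N then x - N else x - (N + N).

Lemma phin_lt N x : x < 3 * N -> phin N x < N.
Proof. rewrite /phin; repeat case: ifP => ?; lia. Qed.

Lemma phin_cases N x : x < 3 * N ->
  (x < N /\ phin N x = x) \/ (N <= x < N + N /\ phin N x = x - N) \/ (N + N <= x /\ phin N x = x - (N + N)).
Proof. move=> hx; rewrite /phin; case: (ltnP x N) => h1; first by left.
by right; case: (ltnP x (N + N)) => h2; [left|right]; split => //; rewrite h1.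
Qed.



Ltac splitH := repeat match goal with H : is_true (_ || _) |- _ => case/orP: H => H end.
Ltac pick := match goal with
  | |- is_true (_ || _) => apply/orP; first [left; lia | right; pick]
  | _ => lia end.

Lemma C1n N x y : 4 < N -> x < 3 * N -> y < 3 * N -> adjn (3 * N) x y -> adjn N (phin N x) (phin N y).
Proof.
move=> h4 hx hy; rewrite /adjn => H.
case: (phin_cases hx) => [[? ->]|[[? ->]|[? ->]]];
case: (phin_cases hy) => [[? ->]|[[? ->]|[? ->]]]; splitH; pick.
Qed.

Lemma C3n N x y y' : 4 < N -> x < 3 * N -> y < 3 * N -> y' < 3 * N ->
  adjn (3 * N) x y -> adjn (3 * N) x y' -> phin N y = phin N y' -> y = y'.
Proof.
move=> h4 hx hy hy'; rewrite /adjn => H1 H2.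
case: (phin_cases hy) => [[? ->]|[[? ->]|[? ->]]];
case: (phin_cases hy') => [[? ->]|[[? ->]|[? ->]]] => E; try lia; splitH; lia.
Qed.

Lemma phinK N v k : v < N -> k < 3 -> phin N (v + k * N) = v.
Proof. move=> hv hk; have : v + k * N < 3 * N by nia.
move=> /phin_cases; case: k hk => [|[|[|]]] //= _; lia. Qed.

Lemma C2n N x v : 4 < N -> x < 3 * N -> v < N -> adjn N (phin N x) v ->
  exists2 k, k < 3 & adjn (3 * N) x (v + k * N).
Proof.
move=> h4 hx hv; rewrite /adjn => H.
case: (phin_cases hx) => [[? E]|[[? E]|[? E]]]; rewrite E in H; splitH;
  first [exists 0; [done|pick] | exists 1; [done|pick] | exists 2; [done|pick]].
Qed.


Lemma ball_dist m (hm : 3 < m) k (u v : 'I_m.+1) : v \in ball (G := circ hm) k u ->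
  (v <= u + 2 * k /\ u <= v + 2 * k) \/ v + m.+1 <= u + 2 * k \/ u + m.+1 <= v + 2 * k.
Proof.
elim: k v => [|k IH] v /=.
  by rewrite inE => /eqP ->; left; lia.
rewrite !inE => /orP[/IH|/existsP[w /andP[hw ha]]]; first lia.
have := IH _ hw; move: ha (ltn_ord w) (ltn_ord v) (ltn_ord u); rewrite /adjn; lia.
Qed.

Lemma three_lemma (a b c d : 'I_3) : a != b -> a != c -> b != c -> d != b -> d != c -> d = a.
Proof.
move: a b c d => [a ha] [b hb] [c hc] [d hd]; rewrite -!val_eqE /= => *.
apply: val_inj => /=; lia.
Qed.

Lemma mod_step N i d : 0 < d -> d < N -> let a := i %% N in let b := (i + d) %% N in
  b = a + d \/ b + N = a + d.
Proof.
move=> hd hdN a b; rewrite /b -modnDml -/a.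
have ha : a < N by rewrite ltn_mod; lia.
case: (ltnP (a + d) N) => h; first by left; rewrite modn_small.
right; have -> : a + d = (a + d - N) + N by lia.
by rewrite modnDr modn_small; lia.
Qed.


Section Conc.
Variable R : nat.
Definition NN := 12 * R + 13.
Lemma hG : 3 < 12 * R + 12. Proof. lia. Qed.
Lemma hH : 3 < 36 * R + 38. Proof. lia. Qed.
Definition Gc := circ hG.
Definition Hc := circ hH.

Lemma eH : (36 * R + 38).+1 = 3 * NN. Proof. rewrite /NN; lia. Qed.
Lemma eG : (12 * R + 12).+1 = NN. Proof. rewrite /NN; lia. Qed.

Definition phi (x : 'I_(gn Hc)) : 'I_(gn Gc) := inord (phin NN x).

Lemma phiE x : phi x = phin NN x :> nat.
Proof. rewrite /phi inordK // eG; apply: phin_lt; rewrite -eH; exact: ltn_ord. Qed.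

Definition idG : ident Gc := fun u => nseq u true.

Lemma idG_inj : injective idG.
Proof. move=> u v /(congr1 size); rewrite !size_nseq; exact: val_inj. Qed.

Lemma N4 : 4 < NN. Proof. rewrite /NN; lia. Qed.

Lemma ltH (x : 'I_(gn Hc)) : (x : nat) < 3 * NN.
Proof. rewrite -eH; exact: ltn_ord x. Qed.

Lemma ltG (x : 'I_(gn Gc)) : (x : nat) < NN.
Proof. rewrite -eG; exact: ltn_ord x. Qed.

Lemma cC1 x y : gadj x y -> gadj (phi x) (phi y).
Proof.
rewrite /= !phiE eG; move: (ltH x) (ltH y); move: (nat_of_ord x) (nat_of_ord y) => a b ha hb.
rewrite eH => h; exact: C1n N4 ha hb h.
Qed.

Lemma cC2 x v : gadj (phi x) v -> exists2 y, gadj x y & phi y = v.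
Proof.
move=> h0; have h : adjn NN (phin NN x) v.
  by move: h0; rewrite /= phiE; move: (nat_of_ord v) => b; rewrite eG.
have [k hk ha] := C2n N4 (ltH x) (ltG v) h.
have hy : v + k * NN < (36 * R + 38).+1 by rewrite eH; move: (ltG v); nia.
exists (Ordinal hy) => /=; last by apply: ord_inj; rewrite phiE /= phinK // ltG.
move: ha; move: (nat_of_ord x) => a; by rewrite eH.
Qed.

Lemma cC3 x y y' : gadj x y -> gadj x y' -> phi y = phi y' -> y = y'.
Proof.
rewrite /= => h1 h2 /(congr1 (@nat_of_ord _)); rewrite !phiE => e.
apply: ord_inj; move: h1 h2 e (ltH x) (ltH y) (ltH y').
move: (nat_of_ord x) (nat_of_ord y) (nat_of_ord y') => a b c; rewrite eH => h1 h2 e ha hb hc.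
exact: (C3n N4 ha hb hc h1 h2 e).
Qed.

Lemma idG_lu r : locally_unique r idG.
Proof. move=> u v ne _; apply/eqP => /idG_inj e; by rewrite e eqxx in ne. Qed.

Lemma idH_lu : locally_unique R (fun x => idG (phi x)).
Proof.
move=> u v ne hb; apply/eqP => /(congr1 size); rewrite !size_nseq !phiE => e.
have hd := ball_dist hb; have hu := ltH u; have hv := ltH v.
have ne' : (u : nat) != v by apply: contra ne => /eqP h; apply/eqP; exact: ord_inj h.
move: (hu) (hv) e (phin_cases hu) (phin_cases hv) ne' hd.
clear hu hv; case: u {ne hb} => a ha; case: v => b hb /=.
rewrite /NN; lia.
Qed.

Lemma Hcol : three_colorable Hc.
Proof.
exists (fun x => inord (x %% 3)) => [[a ha] [b hb]] /=.
rewrite (eH : gn Hc = 3 * NN) /NN in ha hb.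
rewrite -val_eqE /= !inordK ?ltn_pmod //.
rewrite /adjn; lia.
Qed.

Lemma Gnocol : ~ three_colorable Gc.
Proof.
move=> [f hf].
pose g i := f (inord (i %% NN)).
have adj : forall i d, 0 < d < 3 -> g i != g (i + d).
  move=> i d /andP[d0 d3]; rewrite /g; apply: hf => /=.
  have hN : 0 < NN by rewrite /NN; lia.
  rewrite !inordK ?eG ?ltn_mod //.
  have hdN : d < NN by rewrite /NN; lia.
  have := mod_step i d0 hdN; rewrite /=.
  move: (i %% NN) ((i + d) %% NN) => a b; rewrite /adjn; lia.
have g3 : forall i, g (i + 3) = g i.
  move=> i; apply: (three_lemma (b := g (i + 1)) (c := g (i + 2))).
  - by apply: adj.
  - by apply: adj.
  - by move: (adj (i + 1) 1 isT); rewrite -addnA => h; exact: h.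
  - by move: (adj (i + 1) 2 isT); rewrite -addnA eq_sym => h; exact: h.
  - by move: (adj (i + 2) 1 isT); rewrite -addnA eq_sym => h; exact: h.
have gk : forall k, g (3 * k) = g 0.
  elim=> [//|k IH]; by rewrite mulnS addnC g3.
have := adj (12 * R + 12) 1 isT.
have -> : g (12 * R + 12) = g 0 by rewrite (_ : 12 * R + 12 = 3 * (4 * R + 4)) ?gk //; lia.
have -> : g (12 * R + 12 + 1) = g 0.
  have -> : 12 * R + 12 + 1 = NN by rewrite /NN; lia.
  by rewrite /g modnn mod0n.
by rewrite eqxx.
Qed.

End Conc.


Theorem corollary9p2 : ~ LP three_colorable.
Proof.
move=> [M [R [[c [q hlp]] _ hdec]]].
have [hA _] := hlp (Gc R) (@idG R) (@idG_lu R 1).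
have hex : forall r, exists s, reach M (@idG R) r s.
  apply: reach_ex => r s hs u hu /=.
  by have [k [hk _]] := hA r s hs u hu; exists k.
have hlab : forall x, glab x = glab (@phi R x) by [].
have hH : accepts M (idH (@phi R) (@idG R)).
  exact: (hdec (Hc R) _ (@idH_lu R)).2 (@Hcol R).
case: hH => r [t [ht hst hbits]].
have [s hs] := hex r.
have hl := reach_lift (@idG_inj R) hlab (@cC1 R) (@cC2 R) (@cC3 R) hs.
have e := reach_det hl ht; subst t.
have pre : forall u : 'I_(gn (Gc R)), exists x, @phi R x = u.
  move=> u; have hu : (u : nat) < (36 * R + 38).+1.
    by move: (ltG u); rewrite eH; lia.
  exists (Ordinal hu); apply: ord_inj; rewrite phiE /=.
  by have := phinK (ltG u) (isT : 0 < 3); rewrite mul0n addn0.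
apply: (@Gnocol R); apply: (hdec (Gc R) (@idG R) (@idG_lu R R)).1.
exists r, s; split=> // u; have [x <-] := pre u.
- exact: (hst x).
- exact: (hbits x).
Qed.
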